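(* Let $G_{\mathrm{maj}}$ be the $q$-grammar with master variables $S=\{x,y\}$, rule $x_j\mapsto q^jx_0y_0$, $y_j\mapsto q^jx_0y_0$ ($j\ge0$), and order LPO, and let $D$ be its $q$-derivative. Let $\phi$ be the evaluation with $\phi(x_j)=xq^j$ and $\phi(y_j)=yq^j$ for all $j\ge0$ (into $\mathbb{K}[q,x,y]$, $x,y$ commuting indeterminates). Then for all $n\ge1$, \[ \phi\big(D^n(x_0)\big)=A^{\mathrm{maj}}_n(q;x,y):=\sum_{\sigma\in\mathfrak{S}_n}q^{\operatorname{maj}(\sigma)}x^{\operatorname{asc}(\sigma)}y^{\operatorname{des}(\sigma)}. \]
   Context: Let $\mathbb{K}$ be a commutative ring with unity and characteristic zero, $q$ an indeterminate. For a set $S$ of master variables, $\mathbb{S}=\{s_i:s\in S,\ i\in\{0,1,2,\dots\}\}$ is a set of non-commuting variables, $F(\mathbb{S})$ the free group on $\mathbb{S}$ and $\mathbb{E}=\mathbb{K}[q][F(\mathbb{S})]$ its group algebra (finite $\mathbb{K}[q]$-combinations of reduced words in letters from $\mathbb{S}\cup\mathbb{S}^{-1}$). A rule $R$ assigns to each $s_i$ an element $R(s_i)\in\mathbb{E}$, extended by $R(s_i^{-1})=-s_i^{-1}R(s_i)s_{i+1}^{-1}$. The up-arrow $\uparrow$ is the linear map replacing each letter $s_i^{\pm1}$ of a word by $s_{i+1}^{\pm1}$. An order rewrites each word by permuting its letters (extended linearly); LPO stably reorders the letters of a word according to the position of their underlying variable in the sequence $x_0,x_1,x_2,\dots,y_0,y_1,y_2,\dots$.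 A $q$-grammar is a triple $(S,R,\rho)$; its $q$-derivative is the $\mathbb{K}[q]$-linear map $D$ with $D(w_1\cdots w_n)=\sum_{j=1}^n\rho\big(w_1\cdots w_{j-1}R(w_j)\uparrow(w_{j+1}\cdots w_n)\big)$ for letters $w_j\in\mathbb{S}\cup\mathbb{S}^{-1}$, and $D^k=D\circ D^{k-1}$, $D^0=\mathrm{id}$. An evaluation $\phi$ sends each $s_i$ to an element of a commutative ring containing $\mathbb{K}[q]$ and is extended to a $\mathbb{K}[q]$-linear ring morphism on $\mathbb{E}$ with $\phi(s_i^{-1})=\phi(s_i)^{-1}$. For $\sigma\in\mathfrak{S}_n$ with the convention $\sigma_0=\sigma_{n+1}=0$, an index $0\le i\le n$ is a descent if $\sigma_i>\sigma_{i+1}$ and an ascent otherwise; $\operatorname{des},\operatorname{asc}$ count them. $\operatorname{maj}(\sigma)=\sum_{1\le i\le n-1,\ \sigma_i>\sigma_{i+1}}i$ is the usual major index. *)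

(* Defs.v *)
From HB Require Import structures.
From mathcomp Require Import all_boot all_order all_algebra all_fingroup.
From mathcomp Require Import mpoly.
Set Implicit Arguments. Unset Strict Implicit. Unset Printing Implicit Defensive.
Import Order.TTheory GRing.Theory.
Local Open Scope ring_scope.

(* Master variables S = {x, y}: encoded by bool, false = x, true = y.
   A letter (v, i, b) is s_i (b = true) or s_i^{-1} (b = false), s = v. *)
Definition letter := (bool * nat * bool)%type.
Definition lvar (l : letter) : bool := l.1.1.
Definition lidx (l : letter) : nat := l.1.2.
Definition lpos (l : letter) : bool := l.2.
Definition inv_letter (l : letter) : letter := (lvar l, lidx l, ~~ lpos l).

Fixpoint reduce (w : seq letter) : seq letter :=
  match w with
  | [::] => [::]
  | l :: w' =>
      match reduce w' with
      | l' :: r' => if l' == inv_letter l then r' else l :: l' :: r'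
      | [::] => [:: l]
      end
  end.

Definition wmul (u v : seq letter) : seq letter := reduce (u ++ v).

(* An element of E is represented as a finite formal sum (a list) of terms
   c * w with c in K[q] = {poly K} and w a reduced word.  All maps below are
   defined termwise and K[q]-linearly, so they are well defined on E. *)
Section GroupAlgebra.
Variable K : comNzRingType.

Definition E := seq ({poly K} * seq letter).

Definition Eword (w : seq letter) : E := [:: (1, w)].
Definition Eopp (e : E) : E := [seq (- t.1, t.2) | t <- e].
Definition Emul (a b : E) : E :=
  [seq (s.1 * t.1, wmul s.2 t.2) | s <- a, t <- b].

Definition up_letter (l : letter) : letter := (lvar l, (lidx l).+1, lpos l).
Definition upE (e : E) : E := [seq (t.1, map up_letter t.2) | t <- e].

(* A rule assigns R(s_i) to each positive letter: rule v i = R(v_i);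
   it is extended by R(s_i^{-1}) = - s_i^{-1} R(s_i) s_{i+1}^{-1}. *)
Definition ruleL (rule : bool -> nat -> E) (l : letter) : E :=
  if lpos l then rule (lvar l) (lidx l)
  else Eopp (Emul (Emul (Eword [:: l]) (rule (lvar l) (lidx l)))
                  (Eword [:: inv_letter (up_letter l)])).

Definition orderE (ord : seq letter -> seq letter) (e : E) : E :=
  [seq (t.1, reduce (ord t.2)) | t <- e].

Definition Dword (rule : bool -> nat -> E) (ord : seq letter -> seq letter)
  (w : seq letter) : E :=
  flatten [seq orderE ord
             (Emul (Emul (Eword (take j w)) (ruleL rule (nth (false,0,true) w j)))
                   (upE (Eword (drop j.+1 w))))
          | j <- iota 0 (size w)].

Definition qderiv (rule : bool -> nat -> E) (ord : seq letter -> seq letter)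
  (e : E) : E :=
  flatten [seq [seq (t.1 * u.1, u.2) | u <- Dword rule ord t.2] | t <- e].

End GroupAlgebra.

(* LPO: stable sort by the position of the underlying variable in the
   sequence x_0, x_1, x_2, ..., y_0, y_1, y_2, ... *)
Definition lpo_le (l1 l2 : letter) : bool :=
  (~~ lvar l1 && lvar l2) || ((lvar l1 == lvar l2) && (lidx l1 <= lidx l2)%N).
Definition LPO (w : seq letter) : seq letter := sort lpo_le w.

Definition x0y0 : seq letter := [:: (false, 0%N, true); (true, 0%N, true)].
Definition rule_maj (K : comNzRingType) (v : bool) (j : nat) : E K :=
  [:: ('X^j, x0y0)].
Definition Dmaj (K : comNzRingType) : E K -> E K := qderiv (@rule_maj K) LPO.
Definition Ex0 (K : comNzRingType) : E K := Eword K [:: (false, 0%N, true)].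

Section Eval.
Variable K : comNzRingType.
Local Notation T := {mpoly K[3]}.
Definition qv : T := 'X_(@Ordinal 3 0 isT).
Definition xv : T := 'X_(@Ordinal 3 1 isT).
Definition yv : T := 'X_(@Ordinal 3 2 isT).

Definition coefq (c : {poly K}) : T := \sum_(i < size c) c`_i *: qv ^+ i.

(* phi(x_j) = x q^j, phi(y_j) = y q^j.  Inverse letters have no image in
   K[q,x,y] (x, y are not units); they never occur in the elements
   evaluated below, and are sent to 0. *)
Definition phi_letter (l : letter) : T :=
  if lpos l then (if lvar l then yv else xv) * qv ^+ lidx l else 0.

Definition phiE (e : E K) : T :=
  \sum_(t <- e) coefq t.1 * \prod_(l <- t.2) phi_letter l.

(* sigma_1 ... sigma_n with values in 1..n, padded sigma_0 = sigma_{n+1} = 0 *)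
Definition ext_perm (n : nat) (s : 'S_n) : seq nat :=
  0%N :: rcons [seq (s i).+1 | i <- enum 'I_n] 0%N.
Definition is_descent (n : nat) (s : 'S_n) (i : nat) : bool :=
  (nth 0%N (ext_perm s) i.+1 < nth 0%N (ext_perm s) i)%N.
Definition des (n : nat) (s : 'S_n) : nat :=
  \sum_(0 <= i < n.+1) is_descent s i.
Definition asc (n : nat) (s : 'S_n) : nat :=
  \sum_(0 <= i < n.+1) ~~ is_descent s i.
Definition maj (n : nat) (s : 'S_n) : nat :=
  \sum_(1 <= i < n) (if is_descent s i then i else 0%N).

Definition Amaj (n : nat) : T :=
  \sum_(s : 'S_n) qv ^+ maj s * xv ^+ asc s * yv ^+ des s.
End Eval.

(* Main.v *)
Require Import Defs.
From HB Require Import structures.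
From mathcomp Require Import all_boot all_order all_algebra all_fingroup.
From mathcomp Require Import mpoly.
From mathcomp Require Import ring zify.
Set Implicit Arguments. Unset Strict Implicit. Unset Printing Implicit Defensive.

Definition ext (t : seq nat) := 0 :: rcons t 0.
Definition isdl (e : seq nat) i := nth 0 e i.+1 < nth 0 e i.
Definition dl (t : seq nat) : seq bool := mkseq (isdl (ext t)) (size t).+1.
Fixpoint majf (d : seq bool) : nat := if d is b :: d' then count id d' + majf d' else 0.
Definition ins (A : Type) p (a : A) (t : seq A) := take p t ++ a :: drop p t.
Definition insd p (d : seq bool) := take p d ++ false :: true :: drop p.+1 d.

Lemma majf_cat u v : majf (u ++ v) = majf u + majf v + size u * count id v.
Proof. elim: u => [|b u IH] /=; first by rewrite add0n addn0. rewrite IH count_cat; lia. Qed.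

Lemma size_insd p d : p < size d -> size (insd p d) = (size d).+1.
Proof. move=> h; rewrite /insd size_cat size_takel ?(ltnW h) //; rewrite [size (_ :: _)]/= size_drop; lia. Qed.

Lemma nth_ins_ext (e : seq nat) p m j : p.+1 <= size e ->
  nth 0 (take p.+1 e ++ m :: drop p.+1 e) j =
  if j < p.+1 then nth 0 e j else if j == p.+1 then m else nth 0 e j.-1.
Proof.
move=> hp; rewrite nth_cat size_takel //.
case: ltnP => hj; first by rewrite nth_take.
case: eqP => [->|ne]; first by rewrite subnn.
have -> : j - p.+1 = (j - p.+2).+1 by lia.
by rewrite /= nth_drop; congr nth; lia.
Qed.

Lemma ext_ins t p m : p <= size t ->
  ext (ins p m t) = take p.+1 (ext t) ++ m :: drop p.+1 (ext t).
Proof.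
move=> hp; rewrite /ext /ins /= -!cats1 take_cat drop_cat.
case: ltnP => h.
  by rewrite -catA.
have -> : p = size t by lia.
by rewrite subnn take0 drop0 cats0 take_size drop_size -catA.
Qed.

Lemma nth_lt (e : seq nat) m j : all (fun v => v < m) e -> 0 < m -> nth 0 e j < m.
Proof.
move=> /allP a m0; case: (ltnP j (size e)) => h; first exact/a/mem_nth.
by rewrite nth_default.
Qed.

Lemma dl_ins t p m : all (fun v => v < m) t -> 0 < m -> p <= size t ->
  dl (ins p m t) = insd p (dl t).
Proof.
move=> hat m0 hp.
have ae : all (fun v => v < m) (ext t) by rewrite /ext /= m0 -cats1 all_cat hat /= m0.
have se : size (ext t) = (size t).+2 by rewrite /ext /= size_rcons.
have sd : size (dl t) = (size t).+1 by rewrite size_mkseq.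
have si : size (ins p m t) = (size t).+1 by rewrite /ins size_cat /= size_take size_drop; case: ltnP; lia.
apply: (@eq_from_nth _ false).
  by rewrite size_insd size_mkseq ?si ?sd //; lia.
rewrite size_mkseq si => i hi.
rewrite nth_mkseq ?si // ext_ins // /isdl !nth_ins_ext ?se //.
rewrite /insd nth_cat size_takel ?sd //; last by lia.
case: (ltnP i p) => h1.
  rewrite nth_take // /dl nth_mkseq; last by lia.
  by rewrite /isdl !ifT //; lia.
case: (ltnP p i) => h2; last first.
  have -> : i = p by lia.
  rewrite subnn ltnn eqxx ltnSn /=; apply/negbTE; rewrite -leqNgt; apply: ltnW; exact: nth_lt.
case: (ltnP (p.+1) i) => h3; last first.
  have -> : i = p.+1 by lia.
  have -> : (p.+2 < p.+1) = false by lia.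
  have -> : (p.+2 == p.+1) = false by lia.
  rewrite subSn // subnn ltnn eqxx; exact: (@nth_lt (ext t) m p.+1 ae m0).
have [k ek] : exists k, i = p.+2 + k by exists (i - p.+2); lia.
subst i.
rewrite !ifF; try lia.
have -> : p.+2 + k - p = k.+2 by lia.
rewrite [nth _ (_ :: _) _]/= nth_drop (nth_map 0) ?size_iota; last by lia.
rewrite nth_iota; last by lia.
rewrite /isdl; congr (nth _ _ _ < nth _ _ _); lia.
all: lia.
Qed.

Definition tl n (s : 'S_n) : seq nat := [seq (s i).+1 | i <- enum 'I_n].
Lemma size_tl n (s : 'S_n) : size (tl s) = n.
Proof. by rewrite size_map size_enum_ord. Qed.
Lemma nth_tl n (s : 'S_n) (j : 'I_n) : nth 0 (tl s) j = (s j).+1.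
Proof. by rewrite /tl (nth_map j) ?size_enum_ord ?ltn_ord // nth_ord_enum. Qed.
Lemma tl_lt n (s : 'S_n) : all (fun v => v < n.+1) (tl s).
Proof. by rewrite all_map; apply/allP => i _ /=; rewrite ltnS ltn_ord. Qed.
Lemma tl_pos n (s : 'S_n) : all (fun v => 0 < v) (tl s).
Proof. by rewrite all_map; apply/allP. Qed.

Lemma tl_lift n (s : 'S_n) (p : 'I_n.+1) :
  tl (lift_perm p ord_max s) = ins p n.+1 (tl s).
Proof.
have hp : p <= n by rewrite -ltnS ltn_ord.
apply: (@eq_from_nth _ 0).
  by rewrite /ins size_cat /= size_take size_drop !size_tl; case: ltnP; lia.
rewrite size_tl => i hi.
have -> : i = Ordinal hi by [].
rewrite nth_tl; case: (unliftP p (Ordinal hi)) => [j|] ->.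
  rewrite lift_perm_lift /= /bump /= (_ : n <= s j = false); last by rewrite leqNgt ltn_ord.
  rewrite add0n /ins nth_cat size_takel ?size_tl //.
  case: (leqP p j) => hpj.
    rewrite add1n (_ : j.+1 < p = false); last by lia.
    rewrite (_ : j.+1 - p = (j - p).+1); last by lia.
    by rewrite /= nth_drop (_ : p + (j - p) = j) ?nth_tl //; lia.
  by rewrite add0n hpj nth_take // nth_tl.
rewrite lift_perm_id /ins nth_cat size_takel ?size_tl // ltnn subnn /=.
done.
Qed.

Lemma sum_count (r : seq nat) (f : pred nat) : \sum_(i <- r) (f i : nat) = count f r.
Proof. by elim: r => [|a r IH]; rewrite ?big_nil ?big_cons ?IH. Qed.

Lemma des_dl n (s : 'S_n) : des s = count id (dl (tl s)).
Proof. by rewrite /des sum_count /dl count_map size_tl. Qed.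
Lemma asc_dl n (s : 'S_n) : asc s = count negb (dl (tl s)).
Proof. by rewrite /asc sum_count /dl count_map size_tl. Qed.

Lemma majf_sum d : majf d = \sum_(i <- iota 0 (size d)) (if nth false d i then i else 0).
Proof.
elim: d => [|b d IH]; first by rewrite big_nil.
rewrite /= big_cons -[1]/(1 + 0) iotaDl big_map if_same add0n.
have -> : \sum_(j <- iota 0 (size d)) (if nth false (b :: d) (1 + j) then 1 + j else 0)
   = \sum_(j <- iota 0 (size d)) ((if nth false d j then j else 0) + nth false d j).
  by apply: eq_bigr => j _ /=; rewrite add0n; case: (nth false d j); rewrite ?addn1.
rewrite big_split /= -IH sum_count addnC; congr (_ + _).
by rewrite -{1}(mkseq_nth false d) /mkseq count_map.
Qed.

Lemma maj_dl n (s : 'S_n) : maj s = majf (dl (tl s)) - n /\ n <= majf (dl (tl s)).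
Proof.
have e : majf (dl (tl s)) = \sum_(i <- iota 0 n.+1) (if isdl (ext (tl s)) i then i else 0).
  rewrite majf_sum /dl size_mkseq size_tl; apply: eq_big_seq => i.
  by rewrite mem_iota add0n => /andP[_ hi]; rewrite nth_mkseq ?size_tl.
rewrite e; case: n s e => [|m] s e.
  by rewrite /maj big_geq // big_cons big_nil; case: (isdl _ _).
have -> : iota 0 m.+2 = 0 :: (iota 1 m ++ [:: m.+1]).
  by rewrite -addn1 iotaD.
rewrite big_cons big_cat big_seq1 /= add0n.
have ft : isdl (ext (tl s)) m.+1.
  rewrite /isdl /ext /= !nth_rcons size_tl ltnn eqxx ltnSn.
  have : nth 0 (tl s) m \in tl s by apply: mem_nth; rewrite size_tl.
  by move/(allP (tl_pos s)).
rewrite ft /maj /index_iota subn1 /= addnK; split => //; lia.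
Qed.

Lemma big_Sn (R : Type) (idx : R) (op : Monoid.com_law idx) n (F : 'S_n.+1 -> R) :
  \big[op/idx]_(u : 'S_n.+1) F u =
  \big[op/idx]_(p : 'I_n.+1) \big[op/idx]_(s : 'S_n) F (lift_perm p ord_max s).
Proof.
pose h (u : 'I_n.+1 * 'S_n) := lift_perm u.1 ord_max u.2.
have hinj : injective h.
  move=> [p s] [p' s'] /= E.
  have ep : p = p'.
    have := lift_perm_id p ord_max s; rewrite /h /= in E; rewrite E.
    case: (unliftP p' p) => [j ->|->] //.
    by rewrite lift_perm_lift => /eqP; rewrite eq_sym (negbTE (neq_lift _ _)).
  subst p'; congr (_, _); apply/permP => k.
  have := congr1 (fun u : 'S_n.+1 => u (lift p k)) E.
  by rewrite /h /= !lift_perm_lift => /lift_inj.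
have hbij : bijective h.
  by apply: inj_card_bij => //; rewrite (@card_prod _ _ : #|{: _ * _}| = _) card_ord !card_Sn factS.
transitivity (\big[op/idx]_(u : 'I_n.+1 * 'S_n) F (h u)).
  by rewrite (reindex h) //; exact: onW_bij.
by rewrite (pair_bigA op (fun p s => F (lift_perm p ord_max s))).
Qed.

Import Order.TTheory GRing.Theory.
Local Open Scope ring_scope.

Section S.
Variable K : comNzRingType.
Local Notation T := {mpoly K[3]}.
Local Notation q := (qv K).
Local Notation x := (xv K).
Local Notation y := (yv K).
Local Notation D := (@Dmaj K).
Local Notation cq := (@coefq K).
Local Notation phiE := (@phiE K).

Lemma coefqE (c : {poly K}) : cq c = horner_alg q c.
Proof.
rewrite /horner_alg /= /horner_morph /= (horner_coef_wide _ (leq_trans (size_poly _ _) (leqnn (size c)))).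
by apply: eq_bigr => i _; rewrite coef_map /= mulr_algl.
Qed.

Lemma coefqM c d : cq (c * d) = cq c * cq d.
Proof. by rewrite !coefqE rmorphM. Qed.
Lemma coefq1 : cq (1 : {poly K}) = 1.
Proof. by rewrite coefqE rmorph1. Qed.
Lemma coefqXn j : cq ('X^j : {poly K}) = q ^+ j.
Proof. by rewrite coefqE rmorphXn /= horner_algX. Qed.

Definition scaleE (c : {poly K}) (e : E K) : E K := [seq (c * t.1, t.2) | t <- e].

Lemma qderiv_cat e1 e2 : D (e1 ++ e2) = D e1 ++ D e2.
Proof. by rewrite /Dmaj /qderiv map_cat flatten_cat. Qed.
Lemma iterD_cat k e1 e2 : iter k D (e1 ++ e2) = iter k D e1 ++ iter k D e2.
Proof. by elim: k => //= k ->; apply: qderiv_cat. Qed.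
Lemma iterD_nil k : iter k D [::] = [::].
Proof. by elim: k => //= k ->. Qed.
Lemma qderiv_scale c e : D (scaleE c e) = scaleE c (D e).
Proof.
rewrite /Dmaj /qderiv /scaleE; elim: e => //= t e IH.
rewrite map_cat IH -!map_comp; congr (_ ++ _); apply: eq_map => u /=.
by rewrite mulrA.
Qed.
Lemma iterD_scale k c e : iter k D (scaleE c e) = scaleE c (iter k D e).
Proof. by elim: k => //= k ->; apply: qderiv_scale. Qed.
Lemma phiE_cat e1 e2 : phiE (e1 ++ e2) = phiE e1 + phiE e2.
Proof. by rewrite /phiE big_cat. Qed.
Lemma phiE_scale c e : phiE (scaleE c e) = cq c * phiE e.
Proof.
rewrite /phiE big_map big_distrr; apply: eq_bigr => t _ /=.
by rewrite coefqM mulrA.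
Qed.
Lemma phiE_iter k e :
  phiE (iter k D e) = \sum_(t <- e) cq t.1 * phiE (iter k D (Eword K t.2)).
Proof.
elim: e => [|[c w] e IH]; first by rewrite iterD_nil big_nil /phiE big_nil.
have -> : (c, w) :: e = scaleE c (Eword K w) ++ e by rewrite /scaleE /= mulr1.
by rewrite iterD_cat phiE_cat iterD_scale phiE_scale IH big_cons /= mulr1.
Qed.

Definition posw (w : seq letter) := all lpos w.
Lemma reduce_pos w : posw w -> reduce w = w.
Proof.
elim: w => //= l w IH /andP[pl pw]; rewrite IH //.
case: w pw {IH} => //= l' w' /andP[pl' _].
case: eqP => // E; move: pl'; rewrite E /lpos /= pl //.
Qed.

Definition phiw (w : seq letter) : T := \prod_(l <- w) phi_letter K l.
Lemma phi_up l : phi_letter K (up_letter l) = phi_letter K l * q.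
Proof.
rewrite /phi_letter /up_letter /lpos /lidx /lvar /=.
case: l => [[v i] b] /=; case: b; last by rewrite mul0r.
by rewrite exprS; ring.
Qed.
Lemma phiw_up w : phiw (map up_letter w) = phiw w * q ^+ size w.
Proof.
rewrite /phiw; elim: w => [|l w IH]; first by rewrite !big_nil mulr1.
by rewrite /= !big_cons IH phi_up exprS; ring.
Qed.
Lemma phiw_cat w1 w2 : phiw (w1 ++ w2) = phiw w1 * phiw w2.
Proof. by rewrite /phiw big_cat. Qed.

Definition cx (w : seq letter) := count (fun l => ~~ lvar l) w.
Definition cy (w : seq letter) := count lvar w.
Definition good w := posw w && sorted implb (map lvar w).

Lemma flatten_single (A B : Type) (f : A -> B) s :
  flatten [seq [:: f j] | j <- s] = [seq f j | j <- s].
Proof. by elim: s => //= a s ->. Qed.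

Lemma posw_LPO w : posw (LPO w) = posw w.
Proof. by rewrite /posw /LPO (perm_all _ (permEl (perm_sort _ _))). Qed.

Lemma posw_take n w : posw w -> posw (take n w).
Proof. by rewrite /posw -{1}(cat_take_drop n w) all_cat => /andP[]. Qed.
Lemma posw_drop n w : posw w -> posw (drop n w).
Proof. by rewrite /posw -{1}(cat_take_drop n w) all_cat => /andP[]. Qed.
Lemma posw_cat a b : posw (a ++ b) = posw a && posw b.
Proof. exact: all_cat. Qed.
Lemma all_up w : posw (map up_letter w) = posw w.
Proof. by rewrite /posw all_map. Qed.

Lemma Dword_pos w : posw w ->
  Dword (@rule_maj K) LPO w =
  [seq ('X^(lidx (nth (false,0%N,true) w j)),
        LPO (take j w ++ x0y0 ++ map up_letter (drop j.+1 w))) | j <- iota 0 (size w)].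
Proof.
move=> pw; rewrite /Dword -[RHS]flatten_single; congr flatten.
apply/eq_in_map => j; rewrite mem_iota add0n => /andP[_ ltj].
have pl : lpos (nth (false, 0%N, true) w j) by apply: (all_nthP _ pw).
rewrite /ruleL pl /rule_maj /Emul /Eword /upE /orderE /= mul1r mulr1.
have pt : posw (take j w) by apply: posw_take.
have pd : posw (map up_letter (drop j.+1 w)) by rewrite all_up; apply: posw_drop.
have p1 : posw (take j w ++ x0y0) by rewrite posw_cat pt.
have p2 : posw (take j w ++ x0y0 ++ map up_letter (drop j.+1 w)).
  by rewrite !posw_cat pt pd.
by rewrite /wmul (reduce_pos p1) -catA (reduce_pos p2) reduce_pos ?posw_LPO.
Qed.

Definition qs (a : nat) : T := \sum_(i < a) q ^+ i.
Lemma qs0 : qs 0 = 0. Proof. by rewrite /qs big_ord0. Qed.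
Lemma qsS a : qs a.+1 = qs a + q ^+ a. Proof. by rewrite /qs big_ord_recr. Qed.
Lemma qsS' a : qs a.+1 = 1 + q * qs a.
Proof. by rewrite /qs big_ord_recl mulr_sumr; congr (_ + _); apply: eq_bigr => i _; rewrite exprS. Qed.

Fixpoint P (k a b : nat) : T :=
  if k is k'.+1 then y * q ^+ b * qs a * P k' a b.+1 + x * qs b * P k' a.+1 b
  else 1.

Lemma sorted_true_all v : sorted implb (true :: v) -> all id v.
Proof. elim: v => //= b v IH /andP[]; case: b => //= _ hp; exact: IH. Qed.

Lemma cx_cy w : (cx w + cy w)%N = size w.
Proof. by rewrite addnC /cx /cy -(count_predC lvar). Qed.

Lemma big_iota1 n (F : nat -> T) :
  \sum_(j <- iota 1 n) F j = \sum_(j <- iota 0 n) F j.+1.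
Proof. by rewrite -[1%N]/(1 + 0)%N iotaDl big_map. Qed.

Lemma gslot (w : seq letter) (A B : T) : sorted implb (map lvar w) ->
  \sum_(j <- iota 0 (size w))
     (if lvar (nth (false,0%N,true) w j) then A else B) * q ^+ (size w - j.+1)
  = A * qs (cy w) + B * q ^+ (cy w) * qs (cx w).
Proof.
elim: w => [|l w IH] /= hs; first by rewrite big_nil /cy /cx /= qs0; ring.
rewrite big_cons big_iota1 /= subn1 /=.
under eq_bigr do rewrite subSS.
rewrite IH; last exact: (path_sorted hs).
have e := cx_cy w.
case hv : (lvar l) => /=; rewrite /cx /cy /= ?hv /= -/(cx w) -/(cy w).
  move: hs; rewrite hv => /sorted_true_all; rewrite all_map => al.
  have cy_s : cy w = size w by apply/eqP; rewrite /cy -all_count.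
  have cx0 : cx w = 0%N by move: e; rewrite cy_s; lia.
  rewrite cx0 qs0 cy_s add1n qsS; ring.
rewrite add0n add1n qsS -e exprD; ring.
Qed.

Lemma lpo_total : total lpo_le.
Proof.
move=> [[a i] b] [[c j] d]; rewrite /lpo_le /lvar /lidx /=.
by case: a; case: c => //=; rewrite leq_total.
Qed.

Lemma phiw_LPO s : phiw (LPO s) = phiw s.
Proof. by rewrite /phiw (perm_big _ (permEl (perm_sort _ _))). Qed.
Lemma count_LPO a s : count a (LPO s) = count a s.
Proof. have h : perm_eq (LPO s) s by rewrite /LPO perm_sort. by move/seq.permP: h => ->. Qed.
Lemma cx_up w : cx (map up_letter w) = cx w.
Proof. by rewrite /cx count_map. Qed.
Lemma cy_up w : cy (map up_letter w) = cy w.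
Proof. by rewrite /cy count_map. Qed.
Lemma cx_cat a b : cx (a ++ b) = (cx a + cx b)%N.
Proof. exact: count_cat. Qed.
Lemma cy_cat a b : cy (a ++ b) = (cy a + cy b)%N.
Proof. exact: count_cat. Qed.

Lemma good_LPO s : posw s -> good (LPO s).
Proof.
move=> ps; rewrite /good posw_LPO ps /=.
apply: (homo_sorted (e := lpo_le)); last exact: sort_sorted lpo_total _.
move=> [[a i] b] [[c j] d]; rewrite /lpo_le /lvar /=.
by case: a; case: c.
Qed.

Lemma G k w : good w -> phiE (iter k D (Eword K w)) = phiw w * P k (cx w) (cy w).
Proof.
elim: k w => [|k IH] w gw.
  by rewrite /= /phiE big_cons big_nil coefq1 /= mul1r mulr1 addr0.
have pw : posw w by case/andP: gw.
rewrite iterSr phiE_iter /= /Dmaj /qderiv /= cats0 Dword_pos // -map_comp big_map.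
rewrite (eq_big_seq (fun j => phiw w * ((if lvar (nth (false,0%N,true) w j)
           then x * P k (cx w).+1 (cy w) else y * P k (cx w) (cy w).+1)
        * q ^+ (size w - j.+1)))); last first.
  move=> j; rewrite mem_iota add0n => /andP[_ ltj] /=.
  set l := nth _ w j.
  have ew : w = take j w ++ l :: drop j.+1 w by rewrite /l -drop_nth // cat_take_drop.
  have pl : lpos l by apply: (all_nthP _ pw).
  set s := (take j w ++ x0y0 ++ map up_letter (drop j.+1 w)).
  have ps : posw s.
    by rewrite /s !posw_cat posw_take // all_up posw_drop.
  rewrite IH; last exact: good_LPO.
  rewrite mul1r coefqXn phiw_LPO /cx /cy !count_LPO -/(cx s) -/(cy s) -/(cx w) -/(cy w).
  have phs : phiw s = phiw (take j w) * (x * y) * (phiw (drop j.+1 w) * q ^+ (size w - j.+1)).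
    rewrite /s !phiw_cat phiw_up size_drop /phiw !big_cons big_nil /phi_letter /= !expr0 !mulr1.
    by rewrite !mulrA.
  have phw : phiw w = phiw (take j w) * phi_letter K l * phiw (drop j.+1 w).
    by rewrite {1}ew phiw_cat /phiw big_cons mulrA.
  have hcx : cx w = (cx (take j w) + ~~ lvar l + cx (drop j.+1 w))%N.
    by rewrite {1}ew cx_cat /cx /= addnA.
  have hcy : cy w = (cy (take j w) + lvar l + cy (drop j.+1 w))%N.
    by rewrite {1}ew cy_cat /cy /= addnA.
  have hcxs : cx s = (cx (take j w) + 1 + cx (drop j.+1 w))%N.
    by rewrite /s !cx_cat cx_up /cx /= addnA.
  have hcys : cy s = (cy (take j w) + 1 + cy (drop j.+1 w))%N.
    by rewrite /s !cy_cat cy_up /cy /= addnA.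
  rewrite phs phw /phi_letter pl hcx hcy hcxs hcys.
  case: (lvar l) => /=; rewrite ?addn0 ?addn1 ?addnS.
    by ring.
  by ring.
rewrite -big_distrr gslot /=; last by case/andP: gw.
by ring.
Qed.
End S.

Section P.
Variable K : comNzRingType.
Local Notation T := {mpoly K[3]}.
Local Notation q := (qv K).
Local Notation x := (xv K).
Local Notation y := (yv K).
Local Notation PP := (P K).
Local Notation qs := (qs K).

Lemma SX d : \sum_(p < size d) (if nth false d p then q ^+ count id (drop p.+1 d) else 0)
  = qs (count id d).
Proof.
elim: d => [|b d IH]; first by rewrite big_ord0 qs0.
rewrite big_ord_recl.
have -> : \sum_(i < size d) (if nth false (b :: d) (lift ord0 i)
          then q ^+ count id (drop (lift ord0 i).+1 (b :: d)) else 0)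
   = \sum_(i < size d) (if nth false d i then q ^+ count id (drop i.+1 d) else 0).
  by apply: eq_bigr => i _; rewrite lift0.
rewrite IH /= drop0; case: b => /=; last by rewrite add0r.
by rewrite add1n qsS addrC.
Qed.

Lemma SY d : \sum_(p < size d) (if nth false d p then 0 else q ^+ (p + count id (drop p.+1 d)))
  = q ^+ count id d * qs (count negb d).
Proof.
elim: d => [|b d IH]; first by rewrite big_ord0 qs0 mulr0.
rewrite big_ord_recl.
have -> : \sum_(i < size d) (if nth false (b :: d) (lift ord0 i) then 0
          else q ^+ (lift ord0 i + count id (drop (lift ord0 i).+1 (b :: d))))
   = q * \sum_(i < size d) (if nth false d i then 0 else q ^+ (i + count id (drop i.+1 d))).
  rewrite mulr_sumr; apply: eq_bigr => i _; rewrite lift0 /=.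
  by case: (nth false d i); rewrite ?mulr0 // addSn exprS.
rewrite IH /= drop0; case: b => /=.
  by rewrite add0r add1n exprS mulrA.
by rewrite add0n qsS'; ring.
Qed.

Definition W k (d : seq bool) (n : nat) : T :=
  q ^+ (majf d - n) * x ^+ count negb d * y ^+ count id d * PP k (count negb d) (count id d).

Lemma slot_perm k n d : size d = n.+1 -> (n <= majf d)%N ->
  \sum_(p < n.+1) W k (insd p d) n.+1 = W (k.+1) d n.
Proof.
move=> sd hm.
set a := count negb d; set b := count id d; set mu := (majf d - n)%N.
transitivity (\sum_(p < n.+1) (q ^+ mu * x ^+ a * y ^+ b) *
   ((if nth false d p then q ^+ count id (drop p.+1 d) else 0) * (x * PP k a.+1 b)
  + (if nth false d p then 0 else q ^+ (p + count id (drop p.+1 d))) * (y * PP k a b.+1))).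
  apply: eq_bigr => p _.
  have hp : (p < size d)%N by rewrite sd.
  have ed : d = take p d ++ nth false d p :: drop p.+1 d by rewrite -drop_nth // cat_take_drop.
  have st : size (take p d) = p by rewrite size_takel // ltnW.
  have ha : a = (count negb (take p d) + ~~ nth false d p + count negb (drop p.+1 d))%N.
    by rewrite /a {1}ed count_cat /= addnA.
  have hb : b = (count id (take p d) + nth false d p + count id (drop p.+1 d))%N.
    by rewrite /b {1}ed count_cat /= addnA.
  have hmd : majf d = (majf (take p d) + (count id (drop p.+1 d) + majf (drop p.+1 d))
       + p * (nth false d p + count id (drop p.+1 d)))%N.
    by rewrite {1}ed majf_cat st.
  have hmi : majf (insd p d) = (majf (take p d) + ((count id (drop p.+1 d)).+1
       + (count id (drop p.+1 d) + majf (drop p.+1 d)))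
       + p * (count id (drop p.+1 d)).+1)%N.
    by rewrite /insd majf_cat st.
  have hai : count negb (insd p d) = (count negb (take p d) + 1 + count negb (drop p.+1 d))%N.
    by rewrite /insd count_cat /=; lia.
  have hbi : count id (insd p d) = (count id (take p d) + 1 + count id (drop p.+1 d))%N.
    by rewrite /insd count_cat /=; lia.
  rewrite /W hai hbi.
  move: ha hb hmd hmi; set c := count id (drop p.+1 d); set M := majf (take p d);
    set Mr := majf (drop p.+1 d).
  case: (nth false d p) => /= ha hb hmd hmi.
    have -> : (majf (insd p d) - n.+1 = mu + c)%N by rewrite /mu hmi; move: hmd hm; rewrite !mulnDr !mulnS; lia.
    rewrite ha hb !addn0 !addn1 exprD !addSn !exprS; ring.
  have -> : (majf (insd p d) - n.+1 = mu + (p + c))%N by rewrite /mu hmi; move: hmd hm; rewrite !mulnDr !mulnS; lia.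
  rewrite ha hb ?addn0 ?addn1 ?add0n exprD ?addSn ?addnS !exprS; ring.
rewrite -big_distrr big_split /= -!big_distrl /=.
have := SX d; rewrite sd => ->.
have := SY d; rewrite sd => ->.
rewrite /W -/a -/b -/mu /=; ring.
Qed.

Definition Q n k : T :=
  \sum_(s : 'S_n) q ^+ maj s * x ^+ asc s * y ^+ des s * PP k (asc s) (des s).

Lemma Q_W n k (s : 'S_n) :
  q ^+ maj s * x ^+ asc s * y ^+ des s * PP k (asc s) (des s) = W k (dl (tl s)) n.
Proof. by rewrite /W asc_dl des_dl (proj1 (maj_dl s)). Qed.

Lemma Q_step n k : Q n.+1 k = Q n k.+1.
Proof.
rewrite /Q big_Sn exchange_big /=; apply: eq_bigr => s _.
rewrite (Q_W k.+1 s) -slot_perm ?size_mkseq ?size_tl //; last exact: (proj2 (maj_dl s)).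
apply: eq_bigr => p _.
rewrite Q_W tl_lift dl_ins ?size_tl ?tl_lt //.
by rewrite -ltnS ltn_ord.
Qed.

Lemma Q0 k : Q 0 k = x * PP k 1 0.
Proof.
rewrite /Q (eq_bigr (fun _ => x * PP k 1 0)).
  by rewrite sumr_const card_Sn /= mulr1n.
move=> s _; rewrite Q_W.
have -> : tl s = [::] by apply: size0nil; rewrite size_tl.
by rewrite /W /= expr0 expr1 expr0 mul1r mulr1.
Qed.

Lemma Q_shift n k : Q n k = Q 0 (n + k).
Proof. by elim: n k => [|n IH] k //; rewrite Q_step IH addnS. Qed.

Lemma Amaj_Q n : Amaj K n = Q n 0.
Proof. by apply: eq_bigr => s _; rewrite /= mulr1. Qed.
End P.

Theorem theorem5p3 (K : comNzRingType) (hK : [pchar K]%R =i pred0) (n : nat) :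
  (1 <= n)%N -> phiE (iter n (@Dmaj K) (Ex0 K)) = Amaj K n.
Proof.
move=> _; rewrite Amaj_Q Q_shift Q0 addn0 /Ex0 G //.
by rewrite /phiw big_cons big_nil /phi_letter /= expr0 !mulr1.
Qed.
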